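(* Let $\wp\colon\tilde X\to X$ be a $2$-cover of connected graphs, let $G\leq\mathrm{Aut}\,X$ be vertex-transitive, and suppose $\wp$ is $G$-split with a sectional complement. Then $\mathrm{CT}(\wp)$ has a complement within the lifted group $\tilde G$ which is transitive on $V(\tilde X)$ if and only if $G$ has a vertex-transitive subgroup of index $2$.
   Context: Graphs are finite and simple; maps are composed on the right. A regular covering projection $\wp\colon\tilde X\to X$ is a surjective graph homomorphism that is a local bijection on neighbourhoods and such that the group $\mathrm{CT}(\wp)$ of covering transformations (automorphisms $c$ of $\tilde X$ with $c\wp=\wp$) acts regularly on each fibre; it is a $2$-cover if $\mathrm{CT}(\wp)\cong\mathbb{Z}_2$. A lift of $g\in\mathrm{Aut}\,X$ is $\tilde g\in\mathrm{Aut}\,\tilde X$ with $\wp g=\tilde g\wp$; $G$ lifts if each element has a lift, and the lifted group $\tilde G$ consists of all lifts of elements of $G$ (so $\tilde G/\mathrm{CT}(\wp)\cong G$). $\wp$ is $G$-split if $G$ lifts and $\mathrm{CT}(\wp)$ has a complement in $\tilde G$. A section is a set of vertices of $\tilde X$ meeting each fibre in exactly one vertex; a complement is sectional if it leaves some section invariant. *)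

(* Defs.v *)
From mathcomp Require Import all_boot all_fingroup.
Set Implicit Arguments. Unset Strict Implicit. Unset Printing Implicit Defensive.
Local Open Scope group_scope.

Definition simple_graph (T : finType) (e : rel T) : Prop :=
  symmetric e /\ irreflexive e.

Definition connected_graph (T : finType) (e : rel T) : Prop :=
  forall x y : T, connect e x y.

Definition Aut_graph (T : finType) (e : rel T) : {set {perm T}} :=
  [set s : {perm T} | [forall x, forall y, e (s x) (s y) == e x y]].

Definition nbhd (T : finType) (e : rel T) (x : T) : {set T} := [set y | e x y].

Definition covering_proj (Vt V : finType) (et : rel Vt) (e : rel V)
    (p : Vt -> V) : Prop :=
  [/\ forall v : V, exists u : Vt, p u = v,
      forall u w : Vt, et u w -> e (p u) (p w),
      forall u : Vt, {in nbhd et u &, injective p} &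
      forall u : Vt, p @: nbhd et u = nbhd e (p u)].

Definition CT (Vt V : finType) (et : rel Vt) (p : Vt -> V) : {set {perm Vt}} :=
  [set c in Aut_graph et | [forall x, p (c x) == p x]].

Definition regular_cover (Vt V : finType) (et : rel Vt) (e : rel V)
    (p : Vt -> V) : Prop :=
  covering_proj et e p /\
  forall x y : Vt, p x = p y -> exists! c : {perm Vt}, c \in CT et p /\ c x = y.

Definition two_cover (Vt V : finType) (et : rel Vt) (e : rel V)
    (p : Vt -> V) : Prop :=
  regular_cover et e p /\ #|CT et p| = 2%N.

(* gt is a lift of g (maps composed on the right: p g = gt p). *)
Definition is_lift (Vt V : finType) (et : rel Vt) (p : Vt -> V)
    (g : {perm V}) (gt : {perm Vt}) : Prop :=
  gt \in Aut_graph et /\ forall x : Vt, p (gt x) = g (p x).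

Definition lifts (Vt V : finType) (et : rel Vt) (p : Vt -> V)
    (G : {set {perm V}}) : Prop :=
  forall g, g \in G -> exists gt, is_lift et p g gt.

Definition lifted_group (Vt V : finType) (et : rel Vt) (p : Vt -> V)
    (G : {set {perm V}}) : {set {perm Vt}} :=
  [set gt in Aut_graph et | [exists g in G, [forall x, p (gt x) == g (p x)]]].

Definition is_section (Vt V : finType) (p : Vt -> V) (S : {set Vt}) : Prop :=
  forall v : V, #|S :&: p @^-1: [set v]| = 1%N.

Definition sectional (Vt V : finType) (p : Vt -> V) (K : {set {perm Vt}}) : Prop :=
  exists S : {set Vt}, is_section p S /\ forall k, k \in K -> (fun x => k x) @: S = S.

Definition vertex_transitive (T : finType) (G : {set {perm T}}) : bool :=
  [transitive G, on [set: T] | 'P].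

(* Main.v *)
Set Warnings "-notation-overridden".
Require Import Defs.
From mathcomp Require Import all_boot all_fingroup.
Set Implicit Arguments. Unset Strict Implicit. Unset Printing Implicit Defensive.
Local Open Scope group_scope.

Lemma gAut_group_set (T : finType) (e : rel T) : group_set (Aut_graph e).
Proof.
apply/group_setP; split.
  by rewrite inE; apply/forallP=> x; apply/forallP=> y; rewrite !perm1.
move=> s t; rewrite !inE => /forallP Hs /forallP Ht.
apply/forallP=> x; apply/forallP=> y; rewrite !permM.
by move/forallP: (Ht (s x)) => /(_ (s y)) /eqP ->; exact: (forallP (Hs x) y).
Qed.

Lemma gAut_mul (T : finType) (e : rel T) s t :
  s \in Aut_graph e -> t \in Aut_graph e -> s * t \in Aut_graph e.
Proof. by move=> Hs Ht; have /group_setP[_ ->] := gAut_group_set e. Qed.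

Lemma lifted_group_set (Vt V : finType) (et : rel Vt) (p : Vt -> V)
  (G : {group {perm V}}) : group_set (lifted_group et p G).
Proof.
apply/group_setP; split.
  rewrite inE (group1 (Group (gAut_group_set et))) /=.
  by apply/existsP; exists 1; rewrite group1; apply/forallP=> x; rewrite !perm1.
move=> s t; rewrite [s \in _]inE [t \in _]inE => /andP[As /existsP[g /andP[Gg /forallP Hg]]]
  /andP[At /existsP[h /andP[Gh /forallP Hh]]].
rewrite inE gAut_mul //; apply/existsP; exists (g * h); rewrite groupM //.
by apply/forallP=> x; rewrite !permM (eqP (Hh _)) (eqP (Hg _)).
Qed.

Lemma idx2M (gT : finGroupType) (K L : {group gT}) x y :
  K \subset L -> #|L : K| = 2 -> x \in L -> y \in L ->
  (x * y \in K) = ((x \in K) == (y \in K)).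
Proof.
move=> sKL iKL Lx Ly.
case Kx: (x \in K); first by rewrite groupMl.
case Ky: (y \in K); first by rewrite groupMr // Kx.
rewrite /=.
have : y^-1 \in L :\: K by rewrite !inE groupV Ky groupV Ly.
move/(rcoset_index2 sKL iKL) => E.
have : x \in K :* y^-1 by rewrite E !inE Kx Lx.
by rewrite mem_rcoset invgK.
Qed.

Definition proj (Vt V : finType) (p : Vt -> V) (x : {perm Vt}) : {perm V} :=
  odflt 1 [pick g : {perm V} | [forall z, p (x z) == g (p z)]].

Lemma projE (Vt V : finType) (p : Vt -> V) (x : {perm Vt}) (g : {perm V}) :
  (forall v, exists u, p u = v) -> (forall z, p (x z) = g (p z)) -> proj p x = g.
Proof.
move=> ps Hg; rewrite /proj; case: pickP => [g' /forallP Hg'|/(_ g)] /=.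
  apply/permP=> v; have [u <-] := ps v.
  by rewrite -(eqP (Hg' u)) Hg.
by move/negP; case; apply/forallP=> z; rewrite Hg.
Qed.

Lemma projP (Vt V : finType) (et : rel Vt) (p : Vt -> V) (G : {group {perm V}}) x :
  (forall v, exists u, p u = v) -> x \in lifted_group et p G ->
  proj p x \in G /\ forall z, p (x z) = proj p x (p z).
Proof.
move=> ps; rewrite inE => /andP[_ /existsP[g /andP[Gg /forallP Hg]]].
have E : proj p x = g by apply: projE => // z; apply/eqP.
by rewrite E; split => // z; apply/eqP.
Qed.

Lemma projM (Vt V : finType) (et : rel Vt) (p : Vt -> V) (G : {group {perm V}}) x y :
  (forall v, exists u, p u = v) -> x \in lifted_group et p G -> y \in lifted_group et p G ->
  proj p (x * y) = proj p x * proj p y.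
Proof.
move=> ps Lx Ly; have [_ Hx] := projP ps Lx; have [_ Hy] := projP ps Ly.
by apply: projE => // z; rewrite !permM Hy Hx.
Qed.

Lemma trans_of (T : finType) (A : {set {perm T}}) (x0 : T) :
  (forall x y, exists2 a, a \in A & a x = y) -> [transitive A, on [set: T] | 'P].
Proof.
move=> H; rewrite /atrans; apply/imsetP; exists x0 => //; apply/esym/setP=> y.
rewrite in_setT; have [a Aa <-] := H x0 y; apply/imsetP; exists a => //.
Qed.

Unset Implicit Arguments.
Theorem proposition3p2 (Vt V : finType) (et : rel Vt) (e : rel V)
    (p : Vt -> V) (G : {group {perm V}}) :
  simple_graph et -> simple_graph e ->
  connected_graph et -> connected_graph e ->
  two_cover et e p ->
  G \subset Aut_graph e ->
  vertex_transitive G ->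
  lifts et p G ->
  (exists K : {group {perm Vt}},
      K \in [complements to CT et p in lifted_group et p G] /\ sectional p K) ->
  (exists K : {group {perm Vt}},
      K \in [complements to CT et p in lifted_group et p G] /\ vertex_transitive K)
  <->
  (exists H : {group {perm V}},
      [/\ H \subset G, #|G : H| = 2%N & vertex_transitive H]).
Proof.
move=> _ _ _ _ [[[ps _ _ _] reg] cCT] sGA Gtr liftG [K [Kcomp [S [Ssec SK]]]].
pose AutG : {group {perm Vt}} := Group (@gAut_group_set Vt et).
pose LG : {group {perm Vt}} := Group (@lifted_group_set Vt V et p G).
have inCT a : (a \in CT et p) = (a \in Aut_graph et) && [forall x, p (a x) == p x].
  by rewrite inE.
have CTg : group_set (CT et p).
  apply/group_setP; split.
    by rewrite inCT (group1 AutG); apply/forallP=> x; rewrite perm1.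
  move=> a b; rewrite !inCT => /andP[Aa /forallP Ha] /andP[Ab /forallP Hb].
  rewrite gAut_mul //; apply/forallP=> x; rewrite permM (eqP (Hb _)) (eqP (Ha _)) //.
pose CTG : {group {perm Vt}} := Group CTg.
have CTP a : a \in CT et p -> a \in Aut_graph et /\ forall x, p (a x) = p x.
  by rewrite inCT => /andP[Aa /forallP Ha]; split=> // x; apply/eqP.
have [c Ec] : exists c, CT et p :\ 1 = [set c].
  apply/cards1P; move: cCT; rewrite (cardsD1 1) (group1 CTG) => /eqP.
  by rewrite add1n eqSS.
have Cc : c \in CT et p by have := set11 c; rewrite -Ec => /setD1P[].
have c1 : c != 1 by have := set11 c; rewrite -Ec => /setD1P[].
have CTc a : a \in CT et p -> a = 1 \/ a = c.
  move=> Ca; case: (eqVneq a 1) => [->|a1]; first by left.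
  by right; apply/set1P; rewrite -Ec; apply/setD1P.
have [cA cp] := CTP c Cc.
have fib x y : p x = p y -> y = x \/ y = c x.
  move=> pxy; have [a [[Ca ax] _]] := reg x y pxy.
  by case: (CTc a Ca) ax => -> <-; [left; rewrite perm1 | right].
have cfix x : c x != x.
  apply/eqP=> cx; have [a [_ U]] := reg x x erefl.
  move/eqP: c1; apply; rewrite -(U c) ?(U 1) //; split => //; first exact: (group1 CTG).
  by rewrite perm1.
have /existsP[x0 _] : [exists x, c x != x].
  apply: contraR c1 => /existsPn H; apply/eqP/permP => x; rewrite perm1.
  by apply/eqP; exact: negbNE (H x).
have cL : c \in LG.
  rewrite inE cA; apply/existsP; exists 1; rewrite group1.
  by apply/forallP=> x; rewrite perm1 cp.
have sCTL : CT et p \subset LG.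
  apply/subsetP=> a Ca; have [aA ap] := CTP a Ca.
  rewrite inE aA; apply/existsP; exists 1; rewrite group1.
  by apply/forallP=> x; rewrite perm1 ap.
have pL x : x \in LG -> proj p x \in G /\ forall z, p (x z) = proj p x (p z).
  exact: projP.
have pM x y : x \in LG -> y \in LG -> proj p (x * y) = proj p x * proj p y.
  exact: projM.
have pCT a : a \in CT et p -> proj p a = 1.
  by move=> /CTP[_ ap]; apply: projE => // z; rewrite perm1 ap.
have CTpr a : a \in LG -> proj p a = 1 -> a \in CT et p.
  move=> La pa; have aA : a \in Aut_graph et by move: (La); rewrite inE => /andP[].
  rewrite inCT aA /=.
  by apply/forallP=> z; have [_ ->] := pL a La; rewrite pa perm1.
have sideK k x : k \in K -> (k x \in S) = (x \in S).
  move=> Kk; rewrite -{1}(SK k Kk); apply/imsetP/idP => [[y Sy /perm_inj ->] //|Sx].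
  by exists x.
have sidec x : (c x \in S) = ~~ (x \in S).
  have := Ssec (p x); set F := _ :&: _ => cF.
  have Fx : x \in p @^-1: [set p x] by rewrite !inE.
  have Fcx : c x \in p @^-1: [set p x] by rewrite !inE cp.
  case Sx: (x \in S); case Scx: (c x \in S) => //=.
    have : [set x; c x] \subset F.
      by apply/subsetP=> y /set2P[]->; rewrite inE ?Sx ?Scx.
    by move/subset_leq_card; rewrite cards2 eq_sym cfix cF.
  move/eqP: cF => /cards1P[s Fs].
  have : s \in F by rewrite Fs set11.
  rewrite !inE => /andP[Ss /eqP ps'].
  by case: (fib x s (esym ps')) => Es; move: Ss; rewrite Es ?Sx ?Scx.
move: Kcomp; rewrite inE => /andP[/eqP KI /eqP KM].
have sKL : K \subset LG by rewrite /= -KM (mulG_subr CTG K).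
have cK : c \notin K.
  apply/negP=> Kc; have : c \in CT et p :&: K by apply/setIP.
  by rewrite KI => /set1gP; apply/eqP.
have iKL : #|LG : K| = 2.
  rewrite -divgS // /= -KM (TI_cardMg (G:=CTG)) // cCT mulnK //.
have dec k : k \in LG -> k \in K \/ exists2 b, b \in K & k = c * b.
  rewrite /= -KM => /mulsgP[a b Ca Kb ->].
  by case: (CTc a Ca) => ->; [left; rewrite mul1g | right; exists b].
have sideL k x : k \in LG -> (k x \in S) = ((k \in K) == (x \in S)).
  move=> Lk; case: (dec k Lk) => [Kk|[b Kb ->]]; first by rewrite sideK // Kk.
  by rewrite permM sideK // sidec groupMr // (negbTE cK); case: (x \in S).
have projK g : g \in G -> exists2 b, b \in K & proj p b = g.
  move=> Gg; have [gt [gA gp]] := liftG g Gg.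
  have Lgt : gt \in LG.
    rewrite inE gA; apply/existsP; exists g; rewrite Gg; apply/forallP=> z.
    by rewrite gp.
  move: (Lgt); rewrite /= -{1}KM => /mulsgP[a b Ca Kb E].
  exists b => //; rewrite -(projE ps gp) E pM ?(pCT a Ca) ?mul1g //.
    exact: (subsetP sCTL).
  exact: (subsetP sKL).
have proj1 : proj p 1 = 1 by apply: projE => // z; rewrite !perm1.
split.
- move=> [K' [K'comp K'tr]].
  move: K'comp; rewrite inE => /andP[/eqP KI' /eqP KM'].
  have sK'L : K' \subset LG by rewrite /= -KM' (mulG_subr CTG K').
  have fM : {in K' &, {morph proj p : x y / x * y}}.
    by move=> x y Kx Ky; apply: pM; apply: (subsetP sK'L).
  pose f := Morphism fM.
  have injf : 'injm f.
    apply/injmP=> x y Kx Ky /= Exy.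
    have Kxy : x * y^-1 \in K' by rewrite groupM ?groupV.
    have Lxy : x * y^-1 \in LG by exact: (subsetP sK'L).
    have Lx : x \in LG by exact: (subsetP sK'L).
    have Lyi : y^-1 \in LG by rewrite groupV; exact: (subsetP sK'L).
    have : x * y^-1 \in CT et p :&: K'.
      rewrite inE Kxy andbT; apply: CTpr => //.
      rewrite pM // Exy -pM ?groupV ?(subsetP sK'L) // mulgV //.
    by rewrite KI' => /set1gP /eqP; rewrite -eq_mulgV1 => /eqP.
  have imG : f @* K' = G.
    rewrite morphimEdom; apply/eqP; rewrite eqEsubset; apply/andP; split.
      apply/subsetP=> _ /imsetP[x Kx ->]; exact: (pL x (subsetP sK'L x Kx)).1.
    apply/subsetP=> g Gg; have [b Kb <-] := projK g Gg.
    have Lb : b \in LG by exact: (subsetP sKL).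
    move: (Lb); rewrite /= -{1}KM' => /mulsgP[a k Ca K'k E].
    apply/imsetP; exists k => //=; rewrite E pM ?(pCT a Ca) ?mul1g //.
      exact: (subsetP sCTL).
    exact: (subsetP sK'L).
  have notsub : ~~ (K' \subset K).
    apply/negP => sK'K.
    have [k K'k E] := atransP2 K'tr (in_setT x0) (in_setT (c x0)).
    rewrite /= apermE in E.
    have := sideL k x0 (subsetP sK'L k K'k); rewrite -E sidec (subsetP sK'K k K'k).
    by case: (x0 \in S).
  have iK' : #|K' : K| = 2.
    apply/eqP; rewrite eqn_leq; apply/andP; split; last by rewrite indexg_gt1.
    rewrite -iKL /indexg; apply: subset_leq_card; exact: imsetS.
  exists (f @* (K' :&: K))%G; split.
  + by rewrite -imG morphimS // subsetIl.
  + by rewrite -imG index_injm // indexgI.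
  + apply: (trans_of (p x0)) => u v.
    have rep w : exists2 s, s \in S & p s = w.
      have /eqP/cards1P[s Fs] := Ssec w.
      have : s \in S :&: p @^-1: [set w] by rewrite Fs set11.
      by rewrite !inE => /andP[Ss /eqP ps']; exists s.
    have [su Ssu psu] := rep u; have [sv Ssv psv] := rep v.
    have [k K'k E] := atransP2 K'tr (in_setT su) (in_setT sv).
    rewrite /= apermE in E.
    have Lk := subsetP sK'L k K'k.
    have Kk : k \in K.
      by have := sideL k su Lk; rewrite -E Ssv Ssu; case: (k \in K).
    exists (f k); first by apply: mem_morphim => //; exact/setIP.
    by rewrite /= -psu -(pL k Lk).2 -E psv.
- move=> [H [sHG iHG Htr]].
  pose K'set := [set x in LG | (x \in K) == (proj p x \in H)].
  have inK' x : (x \in K'set) = (x \in LG) && ((x \in K) == (proj p x \in H)).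
    by rewrite in_set.
  have K'g : group_set K'set.
    apply/group_setP; split.
      by rewrite inK' !group1 proj1 group1.
    move=> x y; rewrite !inK' => /andP[Lx Ex] /andP[Ly Ey].
    rewrite groupM //= pM // (idx2M sKL iKL Lx Ly).
    rewrite (idx2M sHG iHG) ?(pL x Lx).1 ?(pL y Ly).1 //.
    by rewrite (eqP Ex) (eqP Ey).
  pose K' : {group {perm Vt}} := Group K'g.
  have cK' : c \notin K'set by rewrite inK' cL (negbTE cK) (pCT c Cc) group1.
  exists K'; split.
    rewrite inE; apply/andP; split.
      apply/eqP; apply/setP=> a; apply/setIP/set1gP => [[Ca K'a]|->].
        by case: (CTc a Ca) => // Ea; move: K'a; rewrite Ea (negbTE cK').
      by split; [exact: (group1 CTG) | exact: (group1 K')].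
    apply/eqP; apply/eqP; rewrite eqEsubset; apply/andP; split.
      apply/subsetP=> _ /mulsgP[a b Ca K'b ->]; rewrite (groupM (G:=LG)) //.
        exact: (subsetP sCTL).
      by move: K'b; rewrite inK' => /andP[].
    apply/subsetP=> x Lx; case K'x: (x \in K'set).
      by rewrite -(mul1g x) mem_mulg // (group1 CTG).
    rewrite -(mulKVg c x) mem_mulg //.
    have Lci : c^-1 \in LG by rewrite groupV.
    have Cci : c^-1 \in CT et p := groupVr (G:=CTG) Cc.
    rewrite inK' groupM //= (idx2M sKL iKL Lci Lx) groupV (negbTE cK) pM //.
    rewrite (pCT _ Cci) mul1g.
    by move: K'x; rewrite inK' Lx /=; case: (x \in K); case: (proj p x \in H).
  have claim1 u v : (u \in S) = (v \in S) -> exists2 k, k \in K'set & k u = v.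
    move=> Euv; have [h Hh E] := atransP2 Htr (in_setT (p u)) (in_setT (p v)).
    rewrite /= apermE in E.
    have [b Kb pb] := projK h (subsetP sHG h Hh).
    have Lb := subsetP sKL b Kb.
    exists b; first by rewrite inK' Lb Kb pb Hh.
    have : p (b u) = p v by rewrite (pL b Lb).2 pb E.
    move/esym/fib => [//|Ebu].
    by move: (sideK b u Kb); rewrite Ebu sidec Euv; case: (v \in S).
  have claim2 u : exists2 k, k \in K'set & (k u \in S) = ~~ (u \in S).
    have : ~~ (G \subset H) by rewrite -indexg_gt1 iHG.
    case/subsetPn => g Gg nHg.
    have [b Kb pb] := projK g Gg; have Lb := subsetP sKL b Kb.
    have Lcb : c * b \in LG by rewrite groupM.
    exists (c * b).
      by rewrite inK' Lcb (idx2M sKL iKL cL Lb) (negbTE cK) Kb pM // (pCT c Cc) mul1g pb (negbTE nHg).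
    by rewrite sideL // (idx2M sKL iKL cL Lb) (negbTE cK) Kb; case: (u \in S).
  apply: (trans_of x0) => u v.
  case Euv: ((u \in S) == (v \in S)); first exact: claim1 (eqP Euv).
  have [k K'k Sk] := claim2 u.
  have [|k2 K'k2 E2] := claim1 (k u) v.
    by rewrite Sk; move: Euv; case: (u \in S); case: (v \in S).
  exists (k * k2); first exact: (groupM (G:=K')).
  by rewrite permM E2.
Qed.
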